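(* Let $C\in(\frac{\beta u_0-1}{r},\frac{\beta u_0}{r})$ with $C>\xi_2(\beta)$. Then there exists a unique $z_g^C\in(d,\infty)$ such that the function $g_C=H_{C,z_g^C}\mathbf 1_{[d,z_g^C]}+K_{z_g^C}\mathbf 1_{(z_g^C,\infty)}$ is bounded and solves Problem 2 with $g_C(d)=C$. Moreover, the map $C\mapsto z_g^C$ is increasing and $z_g^{\xi_2(\beta)}=d$, where for $C=\xi_2(\beta)$ the quantity $z_g^C$ denotes the point $t\in[d,\infty)$ with $H_{C,t}(t)=K_t(t)$.
   Context: Fix $\mu\in\mathbb R$, $\sigma>0$, $u_0>0$, $r>0$, $\beta>0$, $d>0$. For $u\in[0,u_0]$ let $\theta_1(u)=\frac{\sqrt{(\mu-u)^2+2r\sigma^2}+(\mu-u)}{\sigma^2}$, $\theta_2(u)=\frac{\sqrt{(\mu-u)^2+2r\sigma^2}-(\mu-u)}{\sigma^2}$; write $\alpha_i=\theta_i(u_0)$, $\gamma_i=\theta_i(0)$ ($i=1,2$). Let $\xi_2(\beta)=\frac{\beta u_0-1}{r}+\frac{\beta}{\alpha_2}$. For $t\ge d$ and real $C$ define for $z\ge d$ $$H_{C,t}(z)=-\frac1r+\frac{C+\frac1r-\frac{\beta}{\gamma_2}e^{-\gamma_2(d-t)}}{e^{\gamma_1d}+\frac{\gamma_1}{\gamma_2}e^{(\gamma_1+\gamma_2)t}e^{-\gamma_2d}}\Big(e^{\gamma_1z}+\frac{\gamma_1}{\gamma_2}e^{(\gamma_1+\gamma_2)t}e^{-\gamma_2z}\Big)+\frac{\beta}{\gamma_2}e^{-\gamma_2(z-t)},$$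 $$K_t(z)=\frac{\beta u_0-1}{r}+\frac{\beta}{\alpha_2}e^{-\alpha_2(z-t)}.$$ Problem 2: a bounded twice continuously differentiable function $g$ on $[d,\infty)$ satisfying $-rg(z)-\mu g'(z)+\frac{\sigma^2}{2}g''(z)+\sup_{u\in[0,u_0]}\{(\beta+g'(z))u\}=1$ for $z\ge d$ (right derivatives at $d$). *)

(* Defs.v *)
From Stdlib Require Import Reals Lra.
From Coquelicot Require Import Coquelicot.
Open Scope R_scope.

Definition theta1 (mu sigma r u : R) : R :=
  (sqrt ((mu - u)^2 + 2 * r * sigma^2) + (mu - u)) / sigma^2.
Definition theta2 (mu sigma r u : R) : R :=
  (sqrt ((mu - u)^2 + 2 * r * sigma^2) - (mu - u)) / sigma^2.

Definition xi2 (mu sigma u0 r beta : R) : R :=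
  (beta * u0 - 1) / r + beta / theta2 mu sigma r u0.

Definition Hfun (mu sigma r beta d C t z : R) : R :=
  let g1 := theta1 mu sigma r 0 in
  let g2 := theta2 mu sigma r 0 in
  - / r
  + (C + / r - beta / g2 * exp (- g2 * (d - t)))
    / (exp (g1 * d) + g1 / g2 * exp ((g1 + g2) * t) * exp (- g2 * d))
    * (exp (g1 * z) + g1 / g2 * exp ((g1 + g2) * t) * exp (- g2 * z))
  + beta / g2 * exp (- g2 * (z - t)).

Definition Kfun (mu sigma u0 r beta t z : R) : R :=
  (beta * u0 - 1) / r
  + beta / theta2 mu sigma r u0 * exp (- theta2 mu sigma r u0 * (z - t)).

Definition gC (mu sigma u0 r beta d C t z : R) : R :=
  if Rle_dec z t then Hfun mu sigma r beta d C t z else Kfun mu sigma u0 r beta t z.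

(* f' is the derivative of f relative to [d, oo) at every z >= d
   (ordinary derivative for z > d, right derivative at z = d). *)
Definition is_deriv_half (d : R) (f f' : R -> R) : Prop :=
  forall z, d <= z ->
    filterlim (fun h => (f (z + h) - f z) / h)
      (within (fun h => h <> 0 /\ d <= z + h) (locally 0))
      (locally (f' z)).

Definition cont_half (d : R) (f : R -> R) : Prop :=
  forall z, d <= z -> filterlim f (within (fun x => d <= x) (locally z)) (locally (f z)).

Definition sup_ctrl (u0 beta p : R) : R :=
  real (Lub_Rbar (fun y => exists u, 0 <= u <= u0 /\ y = (beta + p) * u)).

Definition Problem2 (mu sigma u0 r beta d : R) (g : R -> R) : Prop :=
  (exists M, forall z, d <= z -> Rabs (g z) <= M) /\
  exists g1 g2 : R -> R,
    is_deriv_half d g g1 /\ is_deriv_half d g1 g2 /\ cont_half d g2 /\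
    forall z, d <= z ->
      - r * g z - mu * g1 z + sigma^2 / 2 * g2 z + sup_ctrl u0 beta (g1 z) = 1.

(* Main.v *)
Require Import Defs.
From Stdlib Require Import Reals Lra Psatz.
From Coquelicot Require Import Coquelicot.
Open Scope R_scope.

Lemma ball_R (x e y : R) : ball x e y <-> Rabs (y - x) < e.
Proof. unfold ball; simpl; unfold AbsRing_ball, abs, minus, plus, opp; simpl. tauto. Qed.

Lemma der_half d f f' : (forall z, is_derive f z (f' z)) -> is_deriv_half d f f'.
Proof.
intros H z _. specialize (H z). apply is_derive_Reals in H.
intros P [eps HP].
destruct (H eps (cond_pos eps)) as [del Hdel].
exists del. intros y By [Hy0 _]. change R in y. apply HP. apply ball_R.
apply (proj1 (ball_R _ _ _)) in By. change (Rabs (y - 0) < del) in By. replace (y - 0) with y in By by ring.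
exact (Hdel y Hy0 By).
Qed.

Lemma cont_half_of d f : (forall z, continuous f z) -> cont_half d f.
Proof. intros H z _. eapply filterlim_filter_le_1. apply filter_le_within. apply H. Qed.

Definition pw (t : R) (f1 f2 : R -> R) z := if Rle_dec z t then f1 z else f2 z.

Lemma pw_left t (f1 f2 : R -> R) (x : R) : x < t -> locally x (fun y => f1 y = pw t f1 f2 y).
Proof.
intros Hl. exists (mkposreal (t - x) ltac:(lra)). intros y By. change R in y. apply (proj1 (ball_R _ _ _)) in By. change (Rabs (y - x) < t - x) in By.
unfold pw. destruct (Rle_dec y t); [reflexivity|]. exfalso. change R in y. apply Rabs_def2 in By. destruct By; lra.
Qed.

Lemma pw_right t (f1 f2 : R -> R) (x : R) : t < x -> locally x (fun y => f2 y = pw t f1 f2 y).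
Proof.
intros Hl. exists (mkposreal (x - t) ltac:(lra)). intros y By. change R in y. apply (proj1 (ball_R _ _ _)) in By. change (Rabs (y - x) < x - t) in By.
unfold pw. destruct (Rle_dec y t); [|reflexivity]. exfalso. change R in y. apply Rabs_def2 in By. destruct By; lra.
Qed.

Lemma pw_derive t f1 f2 f1' f2' : (forall x, is_derive f1 x (f1' x)) ->
  (forall x, is_derive f2 x (f2' x)) -> f1 t = f2 t -> f1' t = f2' t ->
  forall x, is_derive (pw t f1 f2) x (pw t f1' f2' x).
Proof.
intros H1 H2 E E' x.
destruct (Rlt_le_dec x t) as [Hl|Hge].
- unfold pw at 2. destruct (Rle_dec x t) as [_|n]; [|lra].
  apply is_derive_ext_loc with f1; [apply pw_left; auto|apply H1].
- destruct (Rle_dec x t) as [Hle|Hn].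
  + assert (x = t) by lra. subst x. unfold pw at 2. destruct (Rle_dec t t); [|lra].
    apply is_derive_Reals. intros eps Heps.
    destruct (proj1 (is_derive_Reals _ _ _) (H1 t) eps Heps) as [d1 Hd1].
    destruct (proj1 (is_derive_Reals _ _ _) (H2 t) eps Heps) as [d2 Hd2].
    assert (Hm : 0 < Rmin d1 d2) by (apply Rmin_pos; [apply (cond_pos d1)|apply (cond_pos d2)]).
    exists (mkposreal _ Hm). intros h hnz hl. simpl in hl.
    unfold pw. destruct (Rle_dec t t); [|lra]. destruct (Rle_dec (t+h) t).
    * apply Hd1; auto. eapply Rlt_le_trans; [exact hl| apply Rmin_l].
    * rewrite E, E'. apply Hd2; auto. eapply Rlt_le_trans; [exact hl| apply Rmin_r].
  + unfold pw at 2. destruct (Rle_dec x t) as [n|_]; [lra|].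
    apply is_derive_ext_loc with f2; [apply pw_right; lra|apply H2].
Qed.

Lemma pw_cont t f1 f2 : (forall x, continuous f1 x) -> (forall x, continuous f2 x) ->
  f1 t = f2 t -> forall x, continuous (pw t f1 f2) x.
Proof.
intros H1 H2 E x.
destruct (Rlt_le_dec x t) as [Hl|Hge].
- assert (pw t f1 f2 x = f1 x) by (unfold pw; destruct (Rle_dec x t); lra).
  unfold continuous. rewrite H. apply filterlim_ext_loc with f1; [apply pw_left; auto|apply H1].
- destruct (Rle_dec x t) as [Hle|Hn].
  + assert (x = t) by lra. subst x.
    apply filterlim_locally. intros eps.
    assert (A1 := proj1 (filterlim_locally _ _) (H1 t) eps).
    assert (A2 := proj1 (filterlim_locally _ _) (H2 t) eps).
    generalize (filter_and _ _ A1 A2). apply filter_imp. intros y [B1 B2].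
    unfold pw. destruct (Rle_dec t t); [|lra]. destruct (Rle_dec y t); auto. rewrite E; auto.
  + assert (pw t f1 f2 x = f2 x) by (unfold pw; destruct (Rle_dec x t); lra).
    unfold continuous. rewrite H. apply filterlim_ext_loc with f2; [apply pw_right; lra|apply H2].
Qed.

Lemma right_cont d f f' z K : d <= z -> is_deriv_half d f f' -> continuous K z ->
  (forall h, 0 < h -> f (z+h) = K (z+h)) -> f z = K z.
Proof.
intros Hz Hder HK Hf.
destruct (Req_dec (f z) (K z)) as [e|ne]; [exact e|exfalso].
set (del := Rabs (K z - f z)). assert (Hdel: 0 < del) by (apply Rabs_pos_lt; lra).
specialize (Hder z Hz).
destruct (Hder (ball (f' z) 1) (locally_ball (f' z) (mkposreal 1 Rlt_0_1))) as [eta Heta].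
destruct (HK (ball (K z) (del/2)) (locally_ball (K z) (mkposreal (del/2) ltac:(lra)))) as [eta2 Heta2].
set (L := Rabs (f' z) + 1).
assert (HL : 0 < L) by (unfold L; generalize (Rabs_pos (f' z)); lra).
set (h := Rmin (Rmin eta eta2) (del / (4 * L)) / 2).
assert (He1 := cond_pos eta). assert (He2 := cond_pos eta2).
assert (Hq : 0 < del / (4*L)) by (apply Rdiv_lt_0_compat; lra).
assert (Hh0 : 0 < h). { unfold h. apply Rdiv_lt_0_compat; [|lra]. repeat apply Rmin_pos; lra. }
assert (Hh1 : h < eta). { unfold h. generalize (Rmin_l (Rmin eta eta2) (del/(4*L))) (Rmin_l eta eta2). lra. }
assert (Hh2 : h < eta2). { unfold h. generalize (Rmin_l (Rmin eta eta2) (del/(4*L))) (Rmin_r eta eta2). lra. }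
assert (Hh3 : h * L <= del / 8).
{ assert (h <= del/(4*L)/2) by (unfold h; generalize (Rmin_r (Rmin eta eta2) (del/(4*L))); lra).
  apply Rle_trans with (del/(4*L)/2 * L). apply Rmult_le_compat_r; lra. right; field; lra. }
assert (B1 : ball (f' z) 1 ((f (z + h) - f z) / h)).
{ apply Heta. apply ball_R. rewrite Rminus_0_r, Rabs_right; lra. split; lra. }
apply (proj1 (ball_R _ _ _)) in B1.
assert (B2 : ball (K z) (del/2) (K (z+h))).
{ apply Heta2. apply ball_R. replace (z + h - z) with h by ring. rewrite Rabs_right; lra. }
apply (proj1 (ball_R _ _ _)) in B2.
set (q := (f (z + h) - f z) / h) in *.
assert (Eq : f (z+h) - f z = q * h) by (unfold q; field; lra).
assert (Hq1 : Rabs q < L).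
{ unfold L. generalize (Rabs_triang (q - f' z) (f' z)). replace (q - f' z + f' z) with q by ring. lra. }
assert (Hq2 : Rabs (f (z+h) - f z) < del / 8).
{ rewrite Eq, Rabs_mult, (Rabs_right h) by lra.
  apply Rlt_le_trans with (L * h). apply Rmult_lt_compat_r; lra. lra. }
rewrite (Hf h Hh0) in Hq2.
assert (Rabs (K z - f z) <= Rabs (K (z+h) - K z) + Rabs (K (z+h) - f z)).
{ replace (K z - f z) with (-(K (z+h) - K z) + (K (z+h) - f z)) by ring.
  eapply Rle_trans. apply Rabs_triang. rewrite Rabs_Ropp. lra. }
fold del in H. lra.
Qed.

Lemma sup_ctrl_val u0 beta p : 0 < u0 -> sup_ctrl u0 beta p = Rmax 0 ((beta + p) * u0).
Proof.
intros Hu. unfold sup_ctrl.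
rewrite (is_lub_Rbar_unique _ (Finite (Rmax 0 ((beta+p)*u0)))). reflexivity.
split.
- intros y [u [Hu' ->]]. simpl.
  destruct (Rle_dec 0 (beta+p)).
  + eapply Rle_trans; [|apply Rmax_r]. nra.
  + eapply Rle_trans; [|apply Rmax_l]. nra.
- intros b Hb. unfold Rmax; destruct Rle_dec; apply Hb.
  + exists u0; split; [lra|reflexivity].
  + exists 0; split; [lra|ring].
Qed.

Lemma exp_le x y : x <= y -> exp x <= exp y.
Proof. intros [H|H]. left; apply exp_increasing; auto. subst; lra. Qed.

Lemma theta_props mu sigma r u : 0 < sigma -> 0 < r ->
  0 < theta1 mu sigma r u /\ 0 < theta2 mu sigma r u /\
  sigma^2/2 * (theta1 mu sigma r u)^2 - (mu-u) * theta1 mu sigma r u - r = 0 /\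
  sigma^2/2 * (theta2 mu sigma r u)^2 + (mu-u) * theta2 mu sigma r u - r = 0 /\
  / theta1 mu sigma r u = (sqrt ((mu - u)^2 + 2 * r * sigma^2) - (mu-u))/(2*r) /\
  / theta2 mu sigma r u = (sqrt ((mu - u)^2 + 2 * r * sigma^2) + (mu-u))/(2*r) /\
  mu - u < sqrt ((mu - u)^2 + 2 * r * sigma^2).
Proof.
intros Hs Hr. unfold theta1, theta2.
set (x := mu - u). set (S := sqrt (x^2 + 2*r*sigma^2)).
assert (HS0 : 0 <= S) by apply sqrt_pos.
assert (HSS : S * S = x^2 + 2*r*sigma^2).
{ unfold S. apply sqrt_sqrt. assert (0 < sigma^2) by (apply pow_lt; lra). nra. }
assert (Hs2 : 0 < sigma^2) by (apply pow_lt; lra).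
assert (Hx1 : x < S) by nra.
assert (Hx2 : - x < S) by nra.
repeat split.
- apply Rdiv_lt_0_compat; lra.
- apply Rdiv_lt_0_compat; lra.
- replace (sigma ^ 2 / 2 * ((S + x) / sigma ^ 2) ^ 2 - x * ((S + x) / sigma ^ 2) - r)
   with ((S*S - x^2 - 2*r*sigma^2)/(2*sigma^2)) by (field; lra). rewrite HSS. field. lra.
- replace (sigma ^ 2 / 2 * ((S - x) / sigma ^ 2) ^ 2 + x * ((S - x) / sigma ^ 2) - r)
   with ((S*S - x^2 - 2*r*sigma^2)/(2*sigma^2)) by (field; lra). rewrite HSS. field. lra.
- replace ((S - x) / (2 * r)) with ((S*S - x^2) / (2*r*(S+x))) by (field; lra).
  rewrite HSS. field. lra.
- replace ((S + x) / (2 * r)) with ((S*S - x^2) / (2*r*(S-x))) by (field; lra).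
  rewrite HSS. field. lra.
- exact Hx1.
Qed.

Lemma e_add a b : exp (a + b) = exp a * exp b.
Proof. apply exp_plus. Qed.
Lemma e_sub a b : exp (a - b) = exp a / exp b.
Proof. unfold Rdiv, Rminus; rewrite <- exp_Ropp, <- exp_plus; reflexivity. Qed.
Lemma e_opp a : exp (- a) = / exp a.
Proof. apply exp_Ropp. Qed.

Definition HA r g1 g2 beta d C t :=
  (C + / r - beta / g2 * exp (- g2 * (d - t)))
    / (exp (g1 * d) + g1 / g2 * exp ((g1 + g2) * t) * exp (- g2 * d)).
Definition HB r g1 g2 beta d C t :=
  HA r g1 g2 beta d C t * (g1 / g2 * exp ((g1 + g2) * t)) + beta / g2 * exp (g2 * t).
Definition Hg r g1 g2 A B z := - / r + A * exp (g1 * z) + B * exp (- g2 * z).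
Definition Hg1 g1 g2 A B z := A * g1 * exp (g1 * z) - B * g2 * exp (- g2 * z).
Definition Hg2 g1 g2 A B z := A * g1^2 * exp (g1 * z) + B * g2^2 * exp (- g2 * z).
Definition Kg K0 a B z := K0 + B * exp (- a * z).
Definition Kg1 a B z := - a * B * exp (- a * z).
Definition Kg2 a B z := a^2 * B * exp (- a * z).
Definition Gt g1 g2 beta a d t :=
  (a - beta / g2 * exp (g2 * (t - d))) / (exp (- g1 * (t - d)) + g1 / g2 * exp (g2 * (t - d))).

Lemma Hfun_eq mu sigma r beta d C t z :
  Hfun mu sigma r beta d C t z =
  Hg r (theta1 mu sigma r 0) (theta2 mu sigma r 0)
     (HA r (theta1 mu sigma r 0) (theta2 mu sigma r 0) beta d C t)
     (HB r (theta1 mu sigma r 0) (theta2 mu sigma r 0) beta d C t) z.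
Proof.
unfold Hfun, Hg, HB. cbv zeta. fold (HA r (theta1 mu sigma r 0) (theta2 mu sigma r 0) beta d C t).
set (g1 := theta1 mu sigma r 0). set (g2 := theta2 mu sigma r 0).
set (A := HA r g1 g2 beta d C t).
replace (- g2 * (z - t)) with (- g2 * z + g2 * t) by ring. rewrite e_add. ring.
Qed.

Lemma Kfun_eq mu sigma u0 r beta t z :
  Kfun mu sigma u0 r beta t z =
  Kg ((beta * u0 - 1) / r) (theta2 mu sigma r u0) (beta / theta2 mu sigma r u0 * exp (theta2 mu sigma r u0 * t)) z.
Proof.
unfold Kfun, Kg. set (a := theta2 mu sigma r u0).
replace (- a * (z - t)) with (- a * z + a * t) by ring. rewrite e_add. ring.
Qed.

Lemma Hg_der r g1 g2 A B z : is_derive (Hg r g1 g2 A B) z (Hg1 g1 g2 A B z).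
Proof. unfold Hg, Hg1. auto_derive; auto. ring. Qed.
Lemma Hg1_der g1 g2 A B z : is_derive (Hg1 g1 g2 A B) z (Hg2 g1 g2 A B z).
Proof. unfold Hg1, Hg2. auto_derive; auto. ring. Qed.
Lemma Hg2_cont g1 g2 A B (z : R) : continuous (Hg2 g1 g2 A B) z.
Proof. apply (ex_derive_continuous (K:=R_AbsRing) (V:=R_NormedModule)). unfold Hg2. auto_derive; auto. Qed.
Lemma Kg_der K0 a B z : is_derive (Kg K0 a B) z (Kg1 a B z).
Proof. unfold Kg, Kg1. auto_derive; auto. ring. Qed.
Lemma Kg1_der a B z : is_derive (Kg1 a B) z (Kg2 a B z).
Proof. unfold Kg1, Kg2. auto_derive; auto. ring. Qed.
Lemma Kg2_cont a B (z:R) : continuous (Kg2 a B) z.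
Proof. apply (ex_derive_continuous (K:=R_AbsRing) (V:=R_NormedModule)). unfold Kg2. auto_derive; auto. Qed.
Lemma Kg_cont K0 a B (z:R) : continuous (Kg K0 a B) z.
Proof. apply (ex_derive_continuous (K:=R_AbsRing) (V:=R_NormedModule)). unfold Kg. auto_derive; auto. Qed.

Lemma Hg_ode mu sigma r g1 g2 A B z : 0 < r ->
  sigma^2/2 * g1^2 - mu * g1 - r = 0 -> sigma^2/2 * g2^2 + mu * g2 - r = 0 ->
  - r * Hg r g1 g2 A B z - mu * Hg1 g1 g2 A B z + sigma^2/2 * Hg2 g1 g2 A B z = 1.
Proof.
intros Hr E1 E2. unfold Hg, Hg1, Hg2.
transitivity (1 + A * exp (g1*z) * (sigma^2/2 * g1^2 - mu * g1 - r)
   + B * exp (-g2*z) * (sigma^2/2 * g2^2 + mu * g2 - r)).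
field. lra. rewrite E1, E2. ring.
Qed.

Lemma Kg_ode mu sigma u0 r beta a B z : 0 < r ->
  sigma^2/2 * a^2 + (mu - u0) * a - r = 0 ->
  - r * Kg ((beta * u0 - 1) / r) a B z - mu * Kg1 a B z + sigma^2/2 * Kg2 a B z
    + (beta + Kg1 a B z) * u0 = 1.
Proof.
intros Hr E. unfold Kg, Kg1, Kg2.
transitivity (1 + B * exp (-a*z) * (sigma^2/2 * a^2 + (mu - u0) * a - r)).
field. lra. rewrite E. ring.
Qed.
Ltac pos := repeat first [ apply Rplus_lt_0_compat | apply Rmult_lt_0_compat | apply exp_pos | apply Rinv_0_lt_compat | apply Rdiv_lt_0_compat | lra ].
Ltac nz := repeat split; try (apply Rgt_not_eq; pos).

Lemma H_at_t r g1 g2 beta d C t : 0 < r -> 0 < g1 -> 0 < g2 ->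
  Hg r g1 g2 (HA r g1 g2 beta d C t) (HB r g1 g2 beta d C t) t =
  - / r + beta / g2 + (g1 + g2) / g2 * Gt g1 g2 beta (C + / r) d t.
Proof.
intros Hr H1 H2. unfold Hg, HB, HA, Gt.
replace (- g2 * (d - t)) with (g2 * t - g2 * d) by ring.
replace (g2 * (t - d)) with (g2 * t - g2 * d) by ring.
replace (- g1 * (t - d)) with (g1 * d - g1 * t) by ring.
replace ((g1 + g2) * t) with (g1 * t + g2 * t) by ring.
replace (- g2 * d) with (- (g2 * d)) by ring.
try replace (- g2 * t) with (- (g2 * t)) by ring.
rewrite !e_sub, !e_add, !e_opp.
assert (0 < exp (g1*t)) by apply exp_pos. assert (0 < exp (g2*t)) by apply exp_pos.
assert (0 < exp (g1*d)) by apply exp_pos. assert (0 < exp (g2*d)) by apply exp_pos.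
assert (0 < g1 / g2) by (apply Rdiv_lt_0_compat; lra).
assert (0 < exp (g1 * t) * exp (g2 * t) * / exp (g2 * d)) by (apply Rmult_lt_0_compat; [nra| apply Rinv_0_lt_compat; lra]).
assert (0 < exp (g1 * d) / exp (g1 * t)) by (apply Rdiv_lt_0_compat; lra).
assert (0 < exp (g2 * t) / exp (g2 * d)) by (apply Rdiv_lt_0_compat; lra).
field. nz.
Qed.

Lemma HA_Gt r g1 g2 beta d C t : 0 < r -> 0 < g1 -> 0 < g2 ->
  HA r g1 g2 beta d C t * exp (g1 * t) = Gt g1 g2 beta (C + / r) d t.
Proof.
intros Hr H1 H2. unfold HA, Gt.
replace (- g2 * (d - t)) with (g2 * t - g2 * d) by ring.
replace (g2 * (t - d)) with (g2 * t - g2 * d) by ring.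
replace (- g1 * (t - d)) with (g1 * d - g1 * t) by ring.
replace ((g1 + g2) * t) with (g1 * t + g2 * t) by ring.
replace (- g2 * d) with (- (g2 * d)) by ring.
try replace (- g2 * t) with (- (g2 * t)) by ring.
rewrite !e_sub, !e_add, !e_opp.
assert (0 < exp (g1*t)) by apply exp_pos. assert (0 < exp (g2*t)) by apply exp_pos.
assert (0 < exp (g1*d)) by apply exp_pos. assert (0 < exp (g2*d)) by apply exp_pos.
assert (0 < g1 / g2) by (apply Rdiv_lt_0_compat; lra).
assert (0 < exp (g1 * t) * exp (g2 * t) * / exp (g2 * d)) by (apply Rmult_lt_0_compat; [nra| apply Rinv_0_lt_compat; lra]).
assert (0 < exp (g1 * d) / exp (g1 * t)) by (apply Rdiv_lt_0_compat; lra).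
assert (0 < exp (g2 * t) / exp (g2 * d)) by (apply Rdiv_lt_0_compat; lra).
field. nz.
Qed.

Lemma Hfun_d r g1 g2 beta d C t : 0 < r -> 0 < g1 -> 0 < g2 ->
  Hg r g1 g2 (HA r g1 g2 beta d C t) (HB r g1 g2 beta d C t) d = C.
Proof.
intros Hr H1 H2. unfold Hg, HB, HA.
replace (- g2 * (d - t)) with (- g2 * d + g2 * t) by ring. rewrite e_add.
assert (0 < exp (g1*d)) by apply exp_pos.
assert (0 < g1 / g2) by (apply Rdiv_lt_0_compat; lra).
assert (0 < exp ((g1 + g2) * t)) by apply exp_pos. assert (0 < exp (- g2 * d)) by apply exp_pos.
assert (0 < g1 / g2 * exp ((g1 + g2) * t) * exp (- g2 * d)) by pos.
field. nz.
Qed.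

Lemma H1_form g1 g2 beta A t z : 0 < g2 ->
  Hg1 g1 g2 A (A * (g1 / g2 * exp ((g1 + g2) * t)) + beta / g2 * exp (g2 * t)) z + beta =
  beta * (1 - exp (g2 * (t - z))) + (A * exp (g1 * t)) * g1 * (exp (- g1 * (t - z)) - exp (g2 * (t - z))).
Proof.
intros H2. unfold Hg1.
replace (g2 * (t - z)) with (g2 * t - g2 * z) by ring.
replace (- g1 * (t - z)) with (g1 * z - g1 * t) by ring.
replace ((g1 + g2) * t) with (g1 * t + g2 * t) by ring.
replace (- g2 * z) with (- (g2 * z)) by ring.
rewrite !e_sub, !e_add, !e_opp.
assert (0 < exp (g1*t)) by apply exp_pos. assert (0 < exp (g2*z)) by apply exp_pos.
field. lra.
Qed.

Lemma frac_lt x y D1 D2 : 0 < D1 -> 0 < D2 -> x * D2 < y * D1 -> x / D1 < y / D2.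
Proof.
intros H1 H2 H. replace (x / D1) with ((x * D2) * / (D1 * D2)) by (field; lra).
replace (y / D2) with ((y * D1) * / (D1 * D2)) by (field; lra).
apply Rmult_lt_compat_r; [apply Rinv_0_lt_compat; nra | exact H].
Qed.
Lemma frac_le x y D1 D2 : 0 < D1 -> 0 < D2 -> x * D2 <= y * D1 -> x / D1 <= y / D2.
Proof.
intros H1 H2 H. replace (x / D1) with ((x * D2) * / (D1 * D2)) by (field; lra).
replace (y / D2) with ((y * D1) * / (D1 * D2)) by (field; lra).
apply Rmult_le_compat_r; [left; apply Rinv_0_lt_compat; nra | exact H].
Qed.

Lemma Gt_decr g1 g2 beta a d t1 t2 : 0 < g1 -> 0 < g2 -> 0 < beta -> 0 <= a ->
  d <= t1 -> t1 < t2 -> Gt g1 g2 beta a d t2 < Gt g1 g2 beta a d t1.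
Proof.
intros H1 H2 Hb Ha Ht1 Ht12. unfold Gt.
set (s := t1 - d). set (D := t2 - t1).
replace (t2 - d) with (s + D) by (unfold s, D; ring).
replace (g2 * (s + D)) with (g2 * s + g2 * D) by ring.
replace (- g1 * (s + D)) with (- g1 * s + - g1 * D) by ring.
rewrite !e_add.
set (P := exp (g2 * s)). set (Y := exp (- g1 * s)).
set (EP := exp (g2 * D)). set (EY := exp (- g1 * D)).
assert (HP : 1 <= P) by (generalize (exp_ineq1_le (g2 * s)); unfold P, s in *; nra).
assert (HY0 : 0 < Y) by apply exp_pos.
assert (HY1 : Y <= 1) by (unfold Y; rewrite <- exp_0; apply exp_le; unfold s; nra).
assert (HEP : 1 + g2 * D <= EP) by apply exp_ineq1_le.
assert (HEY : 1 + - g1 * D <= EY) by apply exp_ineq1_le.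
assert (HEY1 : EY < 1) by (unfold EY; rewrite <- exp_0; apply exp_increasing; unfold D; nra).
assert (HEY0 : 0 < EY) by apply exp_pos.
assert (Hc : 0 < g1 / g2) by (apply Rdiv_lt_0_compat; lra).
assert (Hbb : 0 < beta / g2) by (apply Rdiv_lt_0_compat; lra).
assert (HD : 0 < D) by (unfold D; lra).
assert (0 < EP) by (unfold EP; apply exp_pos). assert (0 < P) by lra. apply frac_lt; [pos|pos|].
set (c := g1 / g2) in *. set (b := beta / g2) in *.
assert (Hc1 : c * P * (EP - 1) >= g1 * D).
{ assert (c * g2 = g1) by (unfold c; field; lra).
  assert (EP - 1 >= g2 * D) by lra.
  assert (c * P * (EP - 1) >= c * 1 * (g2 * D)) by (apply Rle_ge; apply Rmult_le_compat; nra).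
  nra. }
assert (Hc2 : Y * (1 - EY) <= g1 * D).
{ assert (1 - EY <= g1 * D) by lra. assert (Y * (1 - EY) <= 1 * (1 - EY)) by (apply Rmult_le_compat_r; lra). lra. }
assert (0 < g2 * D) by (apply Rmult_lt_0_compat; lra). assert (0 < EP - EY) by lra. assert (Hc3 : 0 < b * P * Y * (EP - EY)) by (apply Rmult_lt_0_compat; [apply Rmult_lt_0_compat; [apply Rmult_lt_0_compat|]|]; assumption).
assert (Hc4 : 0 <= a * (c * P * (EP - 1) - Y * (1 - EY))) by (apply Rmult_le_pos; lra).
nra.
Qed.

Lemma Gt_incr_a g1 g2 beta a1 a2 d t : 0 < g1 -> 0 < g2 -> a1 < a2 ->
  Gt g1 g2 beta a1 d t < Gt g1 g2 beta a2 d t.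
Proof.
intros H1 H2 Ha. unfold Gt. apply frac_lt.
- assert (0 < exp (- g1 * (t - d))) by apply exp_pos. assert (0 < exp (g2 * (t - d))) by apply exp_pos.
  assert (0 < g1 / g2) by (apply Rdiv_lt_0_compat; lra). nra.
- assert (0 < exp (- g1 * (t - d))) by apply exp_pos. assert (0 < exp (g2 * (t - d))) by apply exp_pos.
  assert (0 < g1 / g2) by (apply Rdiv_lt_0_compat; lra). nra.
- apply Rmult_lt_compat_r; [|lra].
  assert (0 < exp (- g1 * (t - d))) by apply exp_pos. assert (0 < exp (g2 * (t - d))) by apply exp_pos.
  assert (0 < g1 / g2) by (apply Rdiv_lt_0_compat; lra). nra.
Qed.

Lemma Gt_d g1 g2 beta a d : 0 < g1 -> 0 < g2 ->
  (g1 + g2) / g2 * Gt g1 g2 beta a d d = a - beta / g2.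
Proof.
intros H1 H2. unfold Gt. replace (d - d) with 0 by ring. rewrite !Rmult_0_r, exp_0.
field. split; lra.
Qed.

Lemma Gt_cont g1 g2 beta a d t : 0 < g1 -> 0 < g2 -> continuous (Gt g1 g2 beta a d) t.
Proof.
intros H1 H2. apply (ex_derive_continuous (K:=R_AbsRing) (V:=R_NormedModule)).
unfold Gt. auto_derive. apply Rgt_not_eq. pos.
Qed.

Lemma Gt_large g1 g2 beta a d Q : 0 < g1 -> 0 < g2 -> 0 < beta ->
  - beta / g1 - beta / g2 < Q ->
  exists T, d < T /\ (g1 + g2) / g2 * Gt g1 g2 beta a d T < Q.
Proof.
intros H1 H2 Hb HQ.
set (k1 := (g1 + g2) / g2). set (c := g1 / g2). set (b := beta / g2).
set (L := - beta / g1 - beta / g2).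
assert (Hc : 0 < c) by (apply Rdiv_lt_0_compat; lra).
assert (Hbb : 0 < b) by (apply Rdiv_lt_0_compat; lra).
assert (Hk : 0 < k1) by (apply Rdiv_lt_0_compat; lra).
assert (Hid : Q * c + k1 * b = c * (Q - L)) by (unfold c, k1, b, L; field; lra).
set (M := Rabs (a / b) + Rabs ((k1 * a - Q) / (c * (Q - L))) + 1).
assert (HM1 : a / b < M) by (unfold M; generalize (Rle_abs (a/b)) (Rabs_pos ((k1 * a - Q) / (c * (Q - L)))); lra).
assert (HM2 : (k1 * a - Q) / (c * (Q - L)) < M) by (unfold M; generalize (Rle_abs ((k1 * a - Q) / (c * (Q - L)))) (Rabs_pos (a/b)); lra).
assert (HM0 : 0 < M) by (unfold M; generalize (Rabs_pos (a/b)) (Rabs_pos ((k1 * a - Q) / (c * (Q - L)))); lra).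
exists (d + M / g2). split.
{ assert (0 < M / g2) by (apply Rdiv_lt_0_compat; lra). lra. }
unfold Gt. fold c b.
replace (g2 * (d + M / g2 - d)) with M by (field; lra).
set (P := exp M). set (Y := exp (- g1 * (d + M / g2 - d))).
assert (HP : M < P) by (unfold P; generalize (exp_ineq1_le M); lra).
assert (HY0 : 0 < Y) by apply exp_pos.
assert (HY1 : Y <= 1).
{ unfold Y; rewrite <- exp_0; apply exp_le. replace (d + M / g2 - d) with (M / g2) by ring.
  assert (0 < M / g2) by (apply Rdiv_lt_0_compat; lra). nra. }
assert (HN : a - b * P < 0).
{ assert (a < b * M). { apply (Rmult_lt_compat_l b) in HM1; [|lra]. replace (b * (a / b)) with a in HM1 by (field; lra). lra. }
  nra. }
assert (HQL0 : 0 < Q - L) by (unfold L; lra). assert (HQL : 0 < c * (Q - L)) by (apply Rmult_lt_0_compat; assumption).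
assert (HK : k1 * a - Q < P * (c * (Q - L))).
{ apply (Rmult_lt_compat_r (c * (Q - L))) in HM2; [|lra].
  replace ((k1 * a - Q) / (c * (Q - L)) * (c * (Q - L))) with (k1 * a - Q) in HM2 by (field; lra). nra. }
assert (E1 : (a - b * P) / (Y + c * P) <= (a - b * P) / (1 + c * P)).
{ apply frac_le; try nra. }
assert (HcP : 0 < 1 + c * P) by (assert (0 < c * P) by (apply Rmult_lt_0_compat; lra); lra).
assert (E3 : k1 * (a - b * P) < Q * (1 + c * P)).
{ assert (Q * (1 + c * P) - k1 * (a - b * P) = P * (Q * c + k1 * b) - (k1 * a - Q)) by ring.
  rewrite Hid in H. lra. }
assert (E2 : k1 * ((a - b * P) / (1 + c * P)) < Q).
{ apply (Rmult_lt_reg_r (1 + c * P)); [lra|].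
  replace (k1 * ((a - b * P) / (1 + c * P)) * (1 + c * P)) with (k1 * (a - b * P)) by (field; lra). lra. }
assert (k1 * ((a - b * P) / (Y + c * P)) <= k1 * ((a - b * P) / (1 + c * P))) by (apply Rmult_le_compat_l; lra).
lra.
Qed.

Lemma key_ineq beta g1 g2 X w : 0 < beta -> 0 < g1 -> 0 < g2 -> 0 <= w ->
  - beta * g2 / (g1 + g2) < X ->
  beta * (1 - exp (g2 * w)) + X * (exp (- g1 * w) - exp (g2 * w)) <= 0.
Proof.
intros Hb H1 H2 Hw HX.
assert (E2 : 1 + g2 * w <= exp (g2 * w)) by apply exp_ineq1_le.
assert (E1 : 1 + - g1 * w <= exp (- g1 * w)) by apply exp_ineq1_le.
assert (E1' : exp (- g1 * w) <= 1) by (rewrite <- exp_0; apply exp_le; nra).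
set (e1 := exp (- g1 * w)) in *. set (e2 := exp (g2 * w)) in *.
set (m := beta * g2 / (g1 + g2)).
assert (Xm : - m < X) by (unfold m; replace (- (beta * g2 / (g1 + g2))) with (- beta * g2 / (g1 + g2)) by (field; lra); exact HX).
assert (G0 : 0 <= g2 * w) by (apply Rmult_le_pos; lra).
assert (G1 : e1 - e2 <= 0) by lra.
assert (A0 : (X + m) * (e1 - e2) <= 0).
{ assert (0 <= (X + m) * (e2 - e1)) by (apply Rmult_le_pos; lra). lra. }
assert (A1 : X * (e1 - e2) <= - m * (e1 - e2)) by lra.
assert (A2 : beta * (1 - e2) - m * (e1 - e2) = beta / (g1 + g2) * (- (g1 * (e2 - 1) + g2 * (e1 - 1)))).
{ unfold m. field. lra. }
assert (A3 : 0 <= g1 * (e2 - 1) + g2 * (e1 - 1)).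
{ assert (g1 * (g2 * w) <= g1 * (e2 - 1)) by (apply Rmult_le_compat_l; lra).
  assert (g2 * (- g1 * w) <= g2 * (e1 - 1)) by (apply Rmult_le_compat_l; lra).
  assert (g1 * (g2 * w) + g2 * (- g1 * w) = 0) by ring. lra. }
assert (A4 : 0 < beta / (g1 + g2)) by (apply Rdiv_lt_0_compat; lra).
assert (0 <= beta / (g1 + g2) * (g1 * (e2 - 1) + g2 * (e1 - 1))) by (apply Rmult_le_pos; lra).
lra.
Qed.

Lemma Problem2_of mu sigma u0 r beta d t (H H1 H2 K K1 K2 : R -> R) :
  0 < sigma -> 0 < u0 ->
  (forall z, is_derive H z (H1 z)) -> (forall z, is_derive H1 z (H2 z)) -> (forall z, continuous H2 z) ->
  (forall z, is_derive K z (K1 z)) -> (forall z, is_derive K1 z (K2 z)) -> (forall z, continuous K2 z) ->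
  (forall z, - r * H z - mu * H1 z + sigma^2/2 * H2 z = 1) ->
  (forall z, - r * K z - mu * K1 z + sigma^2/2 * K2 z + (beta + K1 z) * u0 = 1) ->
  H t = K t -> H1 t = - beta -> K1 t = - beta ->
  (forall z, d <= z <= t -> beta + H1 z <= 0) -> (forall z, t < z -> 0 <= beta + K1 z) ->
  (exists M, forall z, d <= z -> Rabs (pw t H K z) <= M) ->
  Problem2 mu sigma u0 r beta d (pw t H K).
Proof.
intros Hs Hu dH dH1 cH2 dK dK1 cK2 oH oK Et E1 E1' sH sK Hbd.
assert (Hs2 : 0 < sigma^2) by (apply pow_lt; lra).
assert (E2 : H2 t = K2 t).
{ specialize (oH t). specialize (oK t). rewrite E1' in oK. rewrite Et, E1 in oH.
  replace (beta + - beta) with 0 in oK by ring.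
  apply (Rmult_eq_reg_l (sigma^2/2)); [|apply Rgt_not_eq; lra]. lra. }
split; [exact Hbd|].
exists (pw t H1 K1), (pw t H2 K2).
split; [apply der_half; apply pw_derive; [exact dH|exact dK|exact Et|rewrite E1, E1'; reflexivity]|].
split; [apply der_half; apply pw_derive; [exact dH1|exact dK1|rewrite E1, E1'; reflexivity|exact E2]|].
split; [apply cont_half_of; apply pw_cont; auto|].
intros z Hz. rewrite sup_ctrl_val by exact Hu. unfold pw.
destruct (Rle_dec z t) as [Hzt|Hzt].
- rewrite Rmax_left. rewrite Rplus_0_r. apply oH.
  assert (beta + H1 z <= 0) by (apply sH; lra). nra.
- rewrite Rmax_right. apply oK.
  assert (0 <= beta + K1 z) by (apply sK; lra). nra.
Qed.

Lemma Phi_eq mu sigma u0 r beta d C t : 0 < sigma -> 0 < r ->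
  Hfun mu sigma r beta d C t t - Kfun mu sigma u0 r beta t t =
  (theta1 mu sigma r 0 + theta2 mu sigma r 0) / theta2 mu sigma r 0 *
     Gt (theta1 mu sigma r 0) (theta2 mu sigma r 0) beta (C + / r) d t
  - (xi2 mu sigma u0 r beta + / r - beta / theta2 mu sigma r 0).
Proof.
intros Hs Hr.
destruct (theta_props mu sigma r 0 Hs Hr) as [P1 [P2 _]].
destruct (theta_props mu sigma r u0 Hs Hr) as [_ [Pa _]].
rewrite Hfun_eq, H_at_t by auto. unfold Kfun, xi2.
replace (t - t) with 0 by ring. rewrite Rmult_0_r, exp_0. field; repeat split; apply Rgt_not_eq; lra.
Qed.

Lemma Q_pos mu sigma u0 r beta : 0 < sigma -> 0 < r -> 0 < beta -> 0 < u0 ->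
  0 < xi2 mu sigma u0 r beta + / r - beta / theta2 mu sigma r 0 + beta / theta1 mu sigma r 0.
Proof.
intros Hs Hr Hb Hu.
destruct (theta_props mu sigma r 0 Hs Hr) as [P1 [P2 [_ [_ [I1 [I2 _]]]]]].
destruct (theta_props mu sigma r u0 Hs Hr) as [_ [Pa [_ [_ [_ [Ia Sx]]]]]].
unfold xi2, Rdiv. rewrite I1, I2, Ia.
set (S0 := sqrt ((mu - 0) ^ 2 + 2 * r * sigma ^ 2)) in *.
set (S1 := sqrt ((mu - u0) ^ 2 + 2 * r * sigma ^ 2)) in *.
match goal with |- 0 < ?e => replace e with (beta * (S1 - (mu - u0)) * / (2 * r)) by (field; lra) end.
apply Rmult_lt_0_compat; [apply Rmult_lt_0_compat; lra| apply Rinv_0_lt_compat; lra].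
Qed.

Lemma P2_root mu sigma u0 r beta d C z : d <= z ->
  Problem2 mu sigma u0 r beta d (gC mu sigma u0 r beta d C z) ->
  Hfun mu sigma r beta d C z z = Kfun mu sigma u0 r beta z z.
Proof.
intros Hz [_ [f1 [f2 [Hd _]]]].
assert (HH := right_cont d _ _ z (Kfun mu sigma u0 r beta z) Hz Hd).
assert (Eg : gC mu sigma u0 r beta d C z z = Hfun mu sigma r beta d C z z).
{ unfold gC. destruct (Rle_dec z z) as [_|n]; [reflexivity|lra]. }
rewrite <- Eg. apply HH.
- apply (ex_derive_continuous (K:=R_AbsRing) (V:=R_NormedModule)). unfold Kfun. auto_derive. auto.
- intros h Hh. unfold gC. destruct (Rle_dec (z + h) z); [lra|reflexivity].
Qed.

Definition Phi mu sigma u0 r beta d C t :=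
  Hfun mu sigma r beta d C t t - Kfun mu sigma u0 r beta t t.

Lemma Phi_decr mu sigma u0 r beta d C t1 t2 : 0 < sigma -> 0 < r -> 0 < beta ->
  0 <= C + / r -> d <= t1 -> t1 < t2 ->
  Phi mu sigma u0 r beta d C t2 < Phi mu sigma u0 r beta d C t1.
Proof.
intros Hs Hr Hb Ha H1 H2. unfold Phi. rewrite !Phi_eq by auto.
destruct (theta_props mu sigma r 0 Hs Hr) as [P1 [P2 _]].
assert (0 < (theta1 mu sigma r 0 + theta2 mu sigma r 0) / theta2 mu sigma r 0) by (apply Rdiv_lt_0_compat; lra).
assert (HG := Gt_decr _ _ beta (C + / r) d t1 t2 P1 P2 Hb Ha H1 H2).
apply Rplus_lt_compat_r. apply Rmult_lt_compat_l; auto.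
Qed.

Lemma Phi_incrC mu sigma u0 r beta d C1 C2 t : 0 < sigma -> 0 < r -> C1 < C2 ->
  Phi mu sigma u0 r beta d C1 t < Phi mu sigma u0 r beta d C2 t.
Proof.
intros Hs Hr H. unfold Phi. rewrite !Phi_eq by auto.
destruct (theta_props mu sigma r 0 Hs Hr) as [P1 [P2 _]].
assert (0 < (theta1 mu sigma r 0 + theta2 mu sigma r 0) / theta2 mu sigma r 0) by (apply Rdiv_lt_0_compat; lra).
apply Rplus_lt_compat_r. apply Rmult_lt_compat_l; auto. apply Gt_incr_a; auto. lra.
Qed.

Lemma Phi_d mu sigma u0 r beta d C : 0 < sigma -> 0 < r ->
  Phi mu sigma u0 r beta d C d = C - xi2 mu sigma u0 r beta.
Proof.
intros Hs Hr. unfold Phi. rewrite Phi_eq by auto.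
destruct (theta_props mu sigma r 0 Hs Hr) as [P1 [P2 _]].
rewrite Gt_d by auto. ring.
Qed.

Lemma Phi_exists mu sigma u0 r beta d C : 0 < sigma -> 0 < r -> 0 < beta -> 0 < u0 ->
  xi2 mu sigma u0 r beta < C -> exists z, d < z /\ Phi mu sigma u0 r beta d C z = 0.
Proof.
intros Hs Hr Hb Hu HC.
destruct (theta_props mu sigma r 0 Hs Hr) as [P1 [P2 _]].
assert (HQ := Q_pos mu sigma u0 r beta Hs Hr Hb Hu).
set (Q := xi2 mu sigma u0 r beta + / r - beta / theta2 mu sigma r 0) in *.
assert (HQ' : - beta / theta1 mu sigma r 0 - beta / theta2 mu sigma r 0 < Q).
{ assert (0 < beta / theta2 mu sigma r 0) by (apply Rdiv_lt_0_compat; lra).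
  unfold Rdiv in *. lra. }
destruct (Gt_large _ _ beta (C + / r) d Q P1 P2 Hb HQ') as [T [HT1 HT2]].
set (f := fun t => (theta1 mu sigma r 0 + theta2 mu sigma r 0) / theta2 mu sigma r 0 *
     Gt (theta1 mu sigma r 0) (theta2 mu sigma r 0) beta (C + / r) d t - Q).
assert (Hf : forall t, Phi mu sigma u0 r beta d C t = f t) by (intros; unfold Phi, f; apply Phi_eq; auto).
assert (Hc : continuity f).
{ intros x. apply continuity_pt_filterlim.
  apply (ex_derive_continuous (K:=R_AbsRing) (V:=R_NormedModule)).
  unfold f, Gt. auto_derive.
  apply Rgt_not_eq. apply Rplus_lt_0_compat. apply exp_pos.
  apply Rmult_lt_0_compat. apply Rdiv_lt_0_compat; lra. apply exp_pos. }
assert (Hfd : 0 < f d) by (rewrite <- Hf, Phi_d by auto; lra).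
assert (HfT : f T < 0) by (unfold f; lra).
destruct (IVT_gen f d T 0 Hc) as [x [Hx Hfx]].
{ split. apply Rle_trans with (f T); [apply Rmin_r|lra].
  apply Rle_trans with (f d); [lra|apply Rmax_l]. }
rewrite Rmin_left in Hx by lra.
exists x. split.
- destruct (Req_dec x d) as [e|ne]; [subst x; lra|lra].
- rewrite Hf; exact Hfx.
Qed.

Lemma abs3 a b c e1 e2 E1 E2 : 0 < e1 <= E1 -> 0 < e2 <= E2 ->
  Rabs (a + b * e1 + c * e2) <= Rabs a + Rabs b * E1 + Rabs c * E2.
Proof.
intros H1 H2.
eapply Rle_trans. apply Rabs_triang. eapply Rle_trans. apply Rplus_le_compat_r. apply Rabs_triang.
rewrite !Rabs_mult, (Rabs_right e1), (Rabs_right e2) by lra.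
generalize (Rabs_pos b) (Rabs_pos c). intros. apply Rplus_le_compat. apply Rplus_le_compat_l.
apply Rmult_le_compat_l; lra. apply Rmult_le_compat_l; lra.
Qed.

Lemma sol_P2 mu sigma u0 r beta d C z : 0 < sigma -> 0 < r -> 0 < beta -> 0 < u0 ->
  d < z -> Phi mu sigma u0 r beta d C z = 0 ->
  Problem2 mu sigma u0 r beta d (gC mu sigma u0 r beta d C z).
Proof.
intros Hs Hr Hb Hu Hz HP.
destruct (theta_props mu sigma r 0 Hs Hr) as [P1 [P2 [Q1 [Q2 _]]]].
destruct (theta_props mu sigma r u0 Hs Hr) as [_ [Pa [_ [Qa _]]]].
replace (mu - 0) with mu in Q1, Q2 by ring.
assert (HQ := Q_pos mu sigma u0 r beta Hs Hr Hb Hu).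
assert (HPhi := HP). unfold Phi in HPhi. rewrite Phi_eq in HPhi by auto.
set (g1 := theta1 mu sigma r 0) in *. set (g2 := theta2 mu sigma r 0) in *.
set (a2 := theta2 mu sigma r u0) in *.
set (Q := xi2 mu sigma u0 r beta + / r - beta / g2) in *.
set (A := HA r g1 g2 beta d C z). set (B := HB r g1 g2 beta d C z).
set (B' := beta / a2 * exp (a2 * z)).
set (K0 := (beta * u0 - 1) / r).
assert (EH : forall y, Hfun mu sigma r beta d C z y = Hg r g1 g2 A B y) by (intros; apply Hfun_eq).
assert (EK : forall y, Kfun mu sigma u0 r beta z y = Kg K0 a2 B' y) by (intros; apply Kfun_eq).
change (gC mu sigma u0 r beta d C z) with (pw z (Hfun mu sigma r beta d C z) (Kfun mu sigma u0 r beta z)).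
assert (HAG := HA_Gt r g1 g2 beta d C z Hr P1 P2). fold A in HAG.
assert (HGQ : Gt g1 g2 beta (C + / r) d z = Q * g2 / (g1 + g2)).
{ apply (Rmult_eq_reg_l ((g1 + g2) / g2)).
  replace ((g1 + g2) / g2 * Gt g1 g2 beta (C + / r) d z) with Q by lra. field. lra.
  apply Rgt_not_eq. apply Rdiv_lt_0_compat; lra. }
assert (H1f : forall y, Hg1 g1 g2 A B y + beta = beta * (1 - exp (g2 * (z - y))) +
     (A * exp (g1 * z)) * g1 * (exp (- g1 * (z - y)) - exp (g2 * (z - y)))).
{ intros y. unfold B, HB. fold A. apply H1_form. lra. }
apply Problem2_of with (H1 := Hg1 g1 g2 A B) (H2 := Hg2 g1 g2 A B) (K1 := Kg1 a2 B') (K2 := Kg2 a2 B'); auto.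
- intros y. apply is_derive_ext with (Hg r g1 g2 A B). intros; symmetry; apply EH. apply Hg_der.
- intros y. apply Hg1_der.
- intros y. apply Hg2_cont.
- intros y. apply is_derive_ext with (Kg K0 a2 B'). intros; symmetry; apply EK. apply Kg_der.
- intros y. apply Kg1_der.
- intros y. apply Kg2_cont.
- intros y. rewrite EH. apply Hg_ode; auto.
- intros y. rewrite EK. apply Kg_ode; auto.
- unfold Phi in HP. lra.
- specialize (H1f z). replace (z - z) with 0 in H1f by ring. rewrite !Rmult_0_r, exp_0 in H1f. lra.
- unfold Kg1, B'. replace (- a2 * z) with (- (a2 * z)) by ring. rewrite e_opp.
  assert (0 < exp (a2 * z)) by apply exp_pos. field. split; apply Rgt_not_eq; lra.
- intros y Hy. rewrite Rplus_comm, H1f. apply key_ineq; auto. lra.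
  rewrite HAG, HGQ.
  assert (0 < g1 * g2 / (g1 + g2)) by (apply Rdiv_lt_0_compat; [apply Rmult_lt_0_compat|]; lra).
  assert (0 < g1 * g2 / (g1 + g2) * (Q + beta / g1)) by (apply Rmult_lt_0_compat; lra).
  replace (Q * g2 / (g1 + g2) * g1) with (g1 * g2 / (g1 + g2) * (Q + beta / g1) + - beta * g2 / (g1 + g2)) by (field; lra).
  lra.
- intros y Hy. unfold Kg1, B'.
  replace (beta + - a2 * (beta / a2 * exp (a2 * z)) * exp (- a2 * y)) with (beta * (1 - exp (- (a2 * (y - z))))).
  assert (exp (- (a2 * (y - z))) <= 1) by (rewrite <- exp_0; apply exp_le; assert (0 < a2 * (y - z)) by (apply Rmult_lt_0_compat; lra); lra).
  nra.
  replace (- (a2 * (y - z))) with (a2 * z + - a2 * y) by ring. rewrite e_add. field. lra.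
- exists (/ r + Rabs A * exp (g1 * z) + Rabs B * exp (- g2 * d) + (Rabs K0 + Rabs B' * exp (- a2 * z))).
  intros y Hy. unfold pw. destruct (Rle_dec y z) as [Hyz|Hyz].
  + rewrite EH. unfold Hg.
    assert (Rabs (- / r) = / r) by (rewrite Rabs_Ropp, Rabs_right; [reflexivity|left; apply Rinv_0_lt_compat; lra]).
    assert (Rabs K0 + Rabs B' * exp (- a2 * z) >= 0).
    { generalize (Rabs_pos K0) (Rabs_pos B') (exp_pos (- a2 * z)). intros. nra. }
    assert (Rabs (- / r + A * exp (g1 * y) + B * exp (- g2 * y)) <= Rabs (- / r) + Rabs A * exp (g1 * z) + Rabs B * exp (- g2 * d)).
    { apply abs3; split; try apply exp_pos; apply exp_le; nra. }
    lra.
  + rewrite EK. unfold Kg.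
    assert (Rabs (K0 + B' * exp (- a2 * y)) <= Rabs K0 + Rabs B' * exp (- a2 * z)).
    { eapply Rle_trans. apply Rabs_triang. rewrite Rabs_mult, (Rabs_right (exp _)) by (left; apply exp_pos).
      apply Rplus_le_compat_l. apply Rmult_le_compat_l. apply Rabs_pos. apply exp_le. nra. }
    assert (0 <= / r + Rabs A * exp (g1 * z) + Rabs B * exp (- g2 * d)).
    { generalize (Rabs_pos A) (Rabs_pos B) (exp_pos (g1 * z)) (exp_pos (- g2 * d)).
      assert (0 < / r) by (apply Rinv_0_lt_compat; lra). intros. nra. }
    lra.
Qed.

Theorem proposition4p6 (mu sigma u0 r beta d : R)
  (Hsigma : 0 < sigma) (Hu0 : 0 < u0) (Hr : 0 < r) (Hbeta : 0 < beta) (Hd : 0 < d) :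
  (* existence and uniqueness of z_g^C *)
  (forall C, (beta * u0 - 1) / r < C -> C < beta * u0 / r ->
     xi2 mu sigma u0 r beta < C ->
     exists! z, d < z /\
       Problem2 mu sigma u0 r beta d (gC mu sigma u0 r beta d C z) /\
       gC mu sigma u0 r beta d C z d = C)
  /\
  (* C |-> z_g^C is increasing *)
  (forall C1 C2 z1 z2,
     (beta * u0 - 1) / r < C1 -> C1 < beta * u0 / r -> xi2 mu sigma u0 r beta < C1 ->
     (beta * u0 - 1) / r < C2 -> C2 < beta * u0 / r -> xi2 mu sigma u0 r beta < C2 ->
     d < z1 -> Problem2 mu sigma u0 r beta d (gC mu sigma u0 r beta d C1 z1) ->
     gC mu sigma u0 r beta d C1 z1 d = C1 ->
     d < z2 -> Problem2 mu sigma u0 r beta d (gC mu sigma u0 r beta d C2 z2) ->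
     gC mu sigma u0 r beta d C2 z2 d = C2 ->
     C1 < C2 -> z1 < z2)
  /\
  (* z_g^{xi_2(beta)} = d : d is the unique t >= d with H_{xi2,t}(t) = K_t(t) *)
  (forall t, d <= t ->
     (Hfun mu sigma r beta d (xi2 mu sigma u0 r beta) t t = Kfun mu sigma u0 r beta t t
      <-> t = d)).
Proof.
assert (Ca : forall C, (beta * u0 - 1) / r < C -> 0 <= C + / r).
{ intros C HC. assert (0 < beta * u0 / r) by (apply Rdiv_lt_0_compat; [apply Rmult_lt_0_compat|]; lra).
  assert ((beta * u0 - 1) / r = beta * u0 / r - / r) by (field; lra). lra. }
assert (Uq : forall C t1 t2, 0 <= C + / r -> d <= t1 -> d <= t2 ->
   Phi mu sigma u0 r beta d C t1 = 0 -> Phi mu sigma u0 r beta d C t2 = 0 -> t1 = t2).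
{ intros C t1 t2 Ha H1 H2 E1 E2.
  destruct (Rtotal_order t1 t2) as [L|[L|L]]; auto.
  - assert (HH := Phi_decr mu sigma u0 r beta d C t1 t2 Hsigma Hr Hbeta Ha H1 L). lra.
  - assert (HH := Phi_decr mu sigma u0 r beta d C t2 t1 Hsigma Hr Hbeta Ha H2 L). lra. }
split; [|split].
- intros C HC1 HC2 HC3.
  destruct (Phi_exists mu sigma u0 r beta d C Hsigma Hr Hbeta Hu0 HC3) as [z [Hz HPz]].
  exists z. split.
  + split; [exact Hz|]. split.
    * apply sol_P2; auto.
    * unfold gC. destruct (Rle_dec d z) as [_|n]; [|lra].
      destruct (theta_props mu sigma r 0 Hsigma Hr) as [P1 [P2 _]].
      rewrite Hfun_eq. apply Hfun_d; auto.
  + intros z' [Hz' [HP' _]].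
    apply P2_root in HP'; [|lra].
    apply (Uq C); auto; try lra. unfold Phi; lra.
- intros C1 C2 z1 z2 A1 _ _ A2 _ _ Hz1 HP1 _ Hz2 HP2 _ HC.
  apply P2_root in HP1; [|lra]. apply P2_root in HP2; [|lra].
  assert (E1 : Phi mu sigma u0 r beta d C1 z1 = 0) by (unfold Phi; lra).
  assert (E2 : Phi mu sigma u0 r beta d C2 z2 = 0) by (unfold Phi; lra).
  destruct (Rlt_le_dec z1 z2) as [L|L]; auto. exfalso.
  assert (I1 := Phi_incrC mu sigma u0 r beta d C1 C2 z1 Hsigma Hr HC).
  destruct L as [L|L].
  + assert (I2 := Phi_decr mu sigma u0 r beta d C2 z2 z1 Hsigma Hr Hbeta (Ca C2 A2) (Rlt_le _ _ Hz2) L). lra.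
  + subst z2. lra.
- intros t Ht.
  assert (Ha : 0 <= xi2 mu sigma u0 r beta + / r).
  { destruct (theta_props mu sigma r u0 Hsigma Hr) as [_ [Pa _]].
    unfold xi2. assert (0 < beta * u0 / r) by (apply Rdiv_lt_0_compat; [apply Rmult_lt_0_compat|]; lra).
    assert (0 < beta / theta2 mu sigma r u0) by (apply Rdiv_lt_0_compat; lra).
    assert ((beta * u0 - 1) / r = beta * u0 / r - / r) by (field; lra). lra. }
  assert (E0 : Phi mu sigma u0 r beta d (xi2 mu sigma u0 r beta) d = 0) by (rewrite Phi_d; auto; ring).
  split.
  + intros E. apply (Uq (xi2 mu sigma u0 r beta)); auto; try lra. unfold Phi; lra.
  + intros ->. unfold Phi in E0. lra.
Qed.
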